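(* For $m\ge 3$, the group $\mathrm{SL}_m(\mathbb{Z})$ has exponential automorphic growth.
   Context: For a finitely generated group $G$ with finite generating set $\Sigma$, the automorphic growth function sends $n$ to the number of $\operatorname{Aut}(G)$-orbits of $G$ containing an element of word length at most $n$. Exponential means it is $\sim$-equivalent to $n\mapsto 2^n$, where $f\sim g$ iff $f\preccurlyeq g$ and $g\preccurlyeq f$, and $f\preccurlyeq g$ means there is $\lambda\in\mathbb{N}\setminus\{0\}$ with $f(n)\le\lambda g(\lambda n+\lambda)+\lambda$ for all $n$. *)

(* Defs.v *)
From HB Require Import structures.
From mathcomp Require Import all_boot all_order all_algebra.
Set Implicit Arguments. Unset Strict Implicit. Unset Printing Implicit Defensive.
Import Order.TTheory GRing.Theory Num.Theory.
Local Open Scope ring_scope.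

Section SLm.
Variable m : nat.
Notation Mat := 'M[int]_m.

Definition inSL (A : Mat) : Prop := \det A = 1.

Definition letter_val (l : Mat * bool) : Mat :=
  if l.2 then invmx l.1 else l.1.

Definition word_val (w : seq (Mat * bool)) : Mat :=
  foldr (fun l acc => letter_val l *m acc) 1%:M w.

Definition word_on (Sigma : seq Mat) (w : seq (Mat * bool)) : Prop :=
  forall l, l \in w -> l.1 \in Sigma.

Definition gen_set (Sigma : seq Mat) : Prop :=
  (forall s, s \in Sigma -> inSL s) /\
  (forall x, inSL x -> exists w, word_on Sigma w /\ word_val w = x).

Definition wlen_le (Sigma : seq Mat) (n : nat) (x : Mat) : Prop :=
  exists w, word_on Sigma w /\ (size w <= n)%N /\ word_val w = x.

Definition is_aut (phi : Mat -> Mat) : Prop :=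
  (forall x, inSL x -> inSL (phi x)) /\
  (forall x y, inSL x -> inSL y -> phi (x *m y) = phi x *m phi y) /\
  (forall x y, inSL x -> inSL y -> phi x = phi y -> x = y) /\
  (forall y, inSL y -> exists x, inSL x /\ phi x = y).

Definition aut_equiv (x y : Mat) : Prop :=
  exists phi, is_aut phi /\ phi x = y.

(* k is the number of Aut-orbits containing an element of word length <= n *)
Definition orbit_count (Sigma : seq Mat) (n k : nat) : Prop :=
  exists s : seq Mat,
    size s = k /\
    (forall x, x \in s -> wlen_le Sigma n x) /\
    (forall i j, (i < k)%N -> (j < k)%N ->
       aut_equiv (nth 0 s i) (nth 0 s j) -> i = j) /\
    (forall x, wlen_le Sigma n x -> exists i, (i < k)%N /\ aut_equiv x (nth 0 s i)).

Definition aut_growth_fun (Sigma : seq Mat) (f : nat -> nat) : Prop :=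
  forall n, orbit_count Sigma n (f n).

End SLm.

Definition growth_le (f g : nat -> nat) : Prop :=
  exists lam : nat, (0 < lam)%N /\
    forall n, (f n <= lam * g (lam * n + lam) + lam)%N.

Definition growth_equiv (f g : nat -> nat) : Prop :=
  growth_le f g /\ growth_le g f.

Definition exponential (f : nat -> nat) : Prop :=
  growth_equiv f (fun n => 2 ^ n)%N.

(* Main.v *)
From HB Require Import structures.
From mathcomp Require Import all_boot all_order all_algebra zify ring.
Require Import Defs.
From Stdlib Require Import ClassicalEpsilon.
Set Implicit Arguments. Unset Strict Implicit. Unset Printing Implicit Defensive.
Import Order.TTheory GRing.Theory Num.Theory.
Local Open Scope ring_scope.


Section ModQ.
Variable n' : nat.
Local Notation n := n'.+1.

Lemma nilp_pow (F : fieldType) (M : 'M[F]_n) k : M ^+ k = 0 -> M ^+ n = 0.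
Proof.
move=> Mk.
have : mxminpoly M %| ('X - 0%:P) ^+ k.
  by apply/mxminpoly_minP; rewrite rmorphXn /= rmorphB /= horner_mx_X horner_mx_C raddf0 subr0.
move=> /dvdp_exp_XsubCP [j jk ej].
have Mj : M ^+ j = 0.
  have : mxminpoly M %| ('X - 0%:P) ^+ j by rewrite -(eqp_dvdr _ ej) dvdpp.
  by move/mxminpoly_minP; rewrite rmorphXn /= rmorphB /= horner_mx_X horner_mx_C raddf0 subr0.
have jn : (j <= n)%N.
  have := dvdp_leq (monic_neq0 (char_poly_monic M)) (mxminpoly_dvd_char M).
  by rewrite size_char_poly (eqp_size ej) polyC0 subr0 size_polyXn.
have -> : M ^+ n = M ^+ (n - j) * M ^+ j by rewrite -exprD subnK.
by rewrite Mj mulr0.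
Qed.

Lemma frob_pow (F : fieldType) q (chq : q \in [pchar F]) (Y : 'M[F]_n) k :
  (Y - 1) ^+ (q ^ k) = Y ^+ (q ^ k) - 1.
Proof.
have chM : q \in [pchar 'M[F]_n] by rewrite pchar_lalg.
elim: k => [|k IH]; first by rewrite expn0 !expr1.
rewrite expnSr !exprM IH.
have := pFrobenius_autB_comm chM (commr1 (Y ^+ (q ^ k))).
by rewrite !pFrobenius_autE expr1n.
Qed.

Variable q : nat.
Hypothesis pq : prime q.
Hypothesis nq : (n <= q)%N.

Lemma base_step (y : 'M[int]_n) k p (e : 'M[int]_n) : (0 < k)%N -> e * e = 0 ->
  y ^+ (q ^ k) = 1 + p *: e -> exists W : 'M[int]_n, y ^+ q = 1 + (q%:Z) *: W.
Proof.
move=> k0 ee yk.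
pose f := @map_mx _ _ (@intmul 'F_q 1) n n.
have chq := pchar_Fp pq.
have fyk : (f y - 1) ^+ (q ^ k) = f (p *: e).
  by rewrite frob_pow // -rmorphXn yk rmorphD rmorph1 /= addrAC subrr add0r.
have nil : (f y - 1) ^+ (q ^ k * 2) = 0.
  rewrite exprM fyk -rmorphXn /= expr2 -scalerAl -scalerAr ee !scaler0.
  by apply/matrixP => i j; rewrite !mxE.
have Mq : (f y - 1) ^+ q = 0.
  have -> : (f y - 1) ^+ q = (f y - 1) ^+ (q - n) * (f y - 1) ^+ n by rewrite -exprD subnK.
  by rewrite (nilp_pow nil) mulr0.
have fyq : f (y ^+ q - 1) = 0.
  by rewrite /f rmorphB rmorph1 rmorphXn /= -(frob_pow chq _ 1) expn1 Mq.
exists (\matrix_(i, j) (((y ^+ q - 1) i j) %/ q)%Z).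
apply/matrixP => i j.
have : (q %| (y ^+ q - 1) i j)%Z.
  by have /matrixP/(_ i j) := fyq; rewrite !mxE (dvdz_pcharf chq) => ->.
move=> /divzK dq.
rewrite -[y ^+ q in LHS](subrK 1) !mxE.
move: dq; rewrite !mxE => dq.
by rewrite mulrC dq addrC.
Qed.


Lemma lift_pow (c : int) (X : 'M[int]_n) j :
  exists Z : 'M[int]_n, (1 + c *: X) ^+ j = 1 + (c * j%:R) *: X + (c * c) *: Z.
Proof.
elim: j => [|j [Z IH]].
  by exists 0; rewrite expr0 mulr0 scale0r scaler0 !addr0.
exists (j%:R *: (X * X) + Z + c *: (Z * X)).
rewrite exprSr IH !mulrDl !mulrDr !mul1r !mulr1.
rewrite -!scalerAl -!scalerAr !scalerA !scalerDr !scalerA.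
rewrite -!addrA; congr (_ + _).
rewrite -[j.+1]addn1 natrD mulrDr mulr1 scalerDl.
rewrite -!addrA addrCA; congr (_ + (_ + (_ *: _ + _))).
by rewrite [c * j%:R * c]mulrC mulrA.
Qed.

Lemma powdiv (y e : 'M[int]_n) k (p : int) i j : (0 < k)%N -> e * e = 0 ->
  e i j = 1 -> y ^+ (q ^ k) = 1 + p *: e -> ((q ^ k)%N %| p)%Z.
Proof.
move=> k0 ee eij yk.
have [W1 yq] := base_step k0 ee yk.
have lift : forall l, exists W : 'M[int]_n, y ^+ (q ^ l.+1) = 1 + ((q ^ l.+1)%N)%:Z *: W.
  elim=> [|l [W IH]]; first by exists W1; rewrite expn1.
  have [Z eZ] := lift_pow ((q ^ l.+1)%N)%:Z W q.
  exists (W + ((q ^ l)%N)%:Z *: Z).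
  rewrite expnSr exprM IH eZ scalerDr scalerA -addrA; congr (_ + (_ *: _ + _)).
    lia.
  congr (_ *: _); rewrite -!PoszM; congr Posz.
  by rewrite -expnSr -!expnD !addSn !addnS.
have [W yW] := lift k.-1.
rewrite prednK // in yW.
have := congr1 (fun M : 'M[int]_n => M i j) (etrans (esym yk) yW).
rewrite !mxE eij mulr1 => /addrI ->.
by rewrite dvdz_mulr.
Qed.
End ModQ.

Definition good (n d : nat) := forall r, prime r -> (r %| d)%N -> (n <= r)%N.

Lemma powdivd n' (y e : 'M[int]_n'.+1) d (p : nat) i j : (0 < d)%N -> good n'.+1 d ->
  e * e = 0 -> e i j = 1 -> y ^+ d = 1 + p%:Z *: e -> (d %| p)%N.
Proof.
move=> d0 gd ee eij yd.
apply/(dvdn_partP _ d0) => r; rewrite mem_primes => /and3P [pr _ rd].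
rewrite p_part.
have k0 : (0 < logn r d)%N by rewrite logn_gt0 mem_primes pr d0.
have dk : (r ^ logn r d %| d)%N by rewrite -p_part dvdn_part.
have := @powdiv n' r pr (gd r pr rd) (y ^+ (d %/ r ^ logn r d)) e (logn r d) p i j k0 ee eij.
rewrite -exprM divnK // => /(_ yd).
by rewrite dvdzE absz_nat.
Qed.


Section Mats.
Variable N : nat.
Local Notation n := N.+1.
Local Notation Mat := 'M[int]_n.
Variables i0 i1 i2 : 'I_n.
Hypothesis h01 : (i0 == i1) = false.
Hypothesis h02 : (i0 == i2) = false.
Hypothesis h12 : (i1 == i2) = false.

Definition Em (i j : 'I_n) (t : int) : Mat := 1 + t *: delta_mx i j.
Definition Um (a b : int) : Mat := 1 + a *: delta_mx i0 i1 + b *: delta_mx i0 i2.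

Lemma dd (a b c d : 'I_n) : delta_mx a b * delta_mx c d = delta_mx a d *+ (b == c) :> Mat.
Proof. exact: mul_delta_mx_cond. Qed.

Let h10 : (i1 == i0) = false. Proof. by rewrite eq_sym. Qed.
Let h20 : (i2 == i0) = false. Proof. by rewrite eq_sym. Qed.
Let h21 : (i2 == i1) = false. Proof. by rewrite eq_sym. Qed.

Lemma sAl (k : int) (x y : Mat) : (k *: x) * y = k *: (x * y).
Proof. by rewrite scalerAl. Qed.
Lemma sAr (k : int) (x y : Mat) : x * (k *: y) = k *: (x * y).
Proof. by rewrite scalerAr. Qed.

Ltac mxsimp := rewrite /Em /Um; do 4 rewrite ?(mulrDl, mulrDr, mul1r, mulr1, sAl, sAr, scalerA, dd,
   h01, h02, h12, h10, h20, h21, eqxx, mulr0n, mulr1n, mul0r, mulr0, scaler0, addr0, add0r);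
   apply/matrixP => rr cc; rewrite !mxE ?mulr0n ?mulr1n; ring.

Lemma UU a b c d : Um a b * Um c d = Um (a + c) (b + d).
Proof. mxsimp. Qed.
Lemma conjL a b : Em i2 i1 (-1) * Um a b * Em i2 i1 1 = Um (a + b) b.
Proof. mxsimp. Qed.
Lemma conjR a b : Em i1 i2 (-1) * Um a b * Em i1 i2 1 = Um a (a + b).
Proof. mxsimp. Qed.
Lemma commU a b : Um a b * Em i1 i2 1 * Um (- a) (- b) * Em i1 i2 (-1) = Em i0 i2 a.
Proof. mxsimp. Qed.
Lemma EE a c : Em i0 i2 a * Em i0 i2 c = Em i0 i2 (a + c).
Proof. mxsimp. Qed.

Lemma det_Em_lo (i j : 'I_n) t : (j < i)%N -> \det (Em i j t) = 1.
Proof.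
move=> ji; rewrite det_trig.
  rewrite big1 // => k _; rewrite !mxE eqxx.
  have -> : ((k == i) && (k == j)) = false.
    apply/andP => -[/eqP a /eqP b]; move: ji; rewrite -a -b ltnn //.
  by rewrite mulr0 addr0.
apply/is_trig_mxP => r c rc; rewrite !mxE.
have -> : (r == c) = false by apply/eqP => e; rewrite e ltnn in rc.
have -> : ((r == i) && (c == j)) = false.
  apply/andP => -[/eqP a /eqP b]; move: ji; rewrite -a -b => ji.
  by have := ltn_trans rc ji; rewrite ltnn.
by rewrite mulr0 addr0.
Qed.

Lemma det_Em (i j : 'I_n) t : i != j -> \det (Em i j t) = 1.
Proof.
move=> ij; case: (ltngtP i j) => h.
- rewrite -det_tr /Em linearD /= trmx1 linearZ /= trmx_delta.
  exact: det_Em_lo.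
- exact: det_Em_lo.
- by move/val_inj: h => e; rewrite e eqxx in ij.
Qed.

Lemma EE_pow p : Em i0 i2 1 ^+ p = Em i0 i2 p%:Z.
Proof.
elim: p => [|p IH]; first by rewrite expr0 /Em scale0r addr0.
by rewrite exprSr IH EE -[p.+1]addn1 PoszD.
Qed.

Lemma Um_split a b : Um a b = Em i0 i1 a * Em i0 i2 b.
Proof. mxsimp. Qed.
End Mats.


Section Grp.
Variable N : nat.
Local Notation n := N.+1.
Local Notation Mat := 'M[int]_n.

Lemma inSL_mul (x y : Mat) : inSL x -> inSL y -> inSL (x * y).
Proof. by rewrite /inSL => hx hy; change (\det (x *m y) = 1); rewrite det_mulmx hx hy mulr1. Qed.

Lemma inSL1 : inSL (1 : Mat).
Proof. exact: det1. Qed.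

Lemma inSL_pow (x : Mat) d : inSL x -> inSL (x ^+ d).
Proof.
move=> hx; elim: d => [|d IH]; first exact: inSL1.
by rewrite exprS; apply: inSL_mul.
Qed.

Lemma word_val_cat (w1 w2 : seq (Mat * bool)) :
  word_val (w1 ++ w2) = word_val w1 * word_val w2.
Proof.
elim: w1 => [|l w1 IH] /=; first by rewrite mul1r.
by rewrite IH; change (letter_val l *m (word_val w1 *m word_val w2) =
  (letter_val l *m word_val w1) *m word_val w2); rewrite mulmxA.
Qed.

Lemma word_on_cat (S : seq Mat) w1 w2 : word_on S w1 -> word_on S w2 -> word_on S (w1 ++ w2).
Proof. by move=> h1 h2 l; rewrite mem_cat => /orP [/h1|/h2]. Qed.

Lemma word_on_nil (S : seq Mat) : word_on S [::].
Proof. by move=> l. Qed.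

Lemma word_val_SL (S : seq Mat) w : (forall s, s \in S -> inSL s) -> word_on S w -> inSL (word_val w).
Proof.
move=> hS; elim: w => [|l w IH] hw /=; first exact: inSL1.
have hl : inSL (letter_val l).
  have := hS _ (hw l (mem_head _ _)); rewrite /letter_val /inSL.
  by move=> d1; case: l.2 => /=; [rewrite det_inv d1 invr1 | exact: d1].
apply: (inSL_mul hl); apply: IH => l' hl'; apply: hw; rewrite in_cons hl' orbT. done.
Qed.

Lemma aut_pow phi (x : Mat) d : is_aut phi -> inSL x -> phi (x ^+ d.+1) = phi x ^+ d.+1.
Proof.
move=> [sl [hom _]] hx; elim: d => [|d IH]; first by rewrite !expr1.
by rewrite exprS (hom _ _ hx (inSL_pow _ hx)) IH [in RHS]exprS.
Qed.

Lemma aut_refl (x : Mat) : aut_equiv x x.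
Proof.
exists id; split=> //; split=> //; split=> //; split=> // y hy; by exists y.
Qed.

Lemma aut_trans (x y z : Mat) : aut_equiv x y -> aut_equiv y z -> aut_equiv x z.
Proof.
move=> [f [[f1 [f2 [f3 f4]]] fx]] [g [[g1 [g2 [g3 g4]]] gy]].
exists (g \o f); split; last by rewrite /= fx.
split; first by move=> a ha; apply/g1/f1.
split; first by move=> a b ha hb /=; rewrite f2 // g2 //; apply: f1.
split; first by move=> a b ha hb /= /g3 h; apply: f3 => //; apply: h; apply: f1.
move=> c hc; have [b [hb gb]] := g4 c hc; have [a [ha fa]] := f4 b hb.
by exists a; split => //=; rewrite fa.
Qed.

Lemma aut_sym (x y : Mat) : inSL x -> aut_equiv x y -> aut_equiv y x.
Proof.
move=> hx [f [[f1 [f2 [f3 f4]]] fx]].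
pose g (z : Mat) : Mat :=
  match excluded_middle_informative (exists x', inSL x' /\ f x' = z) with
  | left H => proj1_sig (constructive_indefinite_description _ H)
  | right _ => z end.
have gP : forall z, inSL z -> inSL (g z) /\ f (g z) = z.
  move=> z hz; rewrite /g; case: excluded_middle_informative => [H|H].
    by case: (constructive_indefinite_description _ H).
  by have [x' hx'] := f4 z hz; case: H; exists x'.
have gf : forall a, inSL a -> g (f a) = a.
  move=> a ha; have [h1 h2] := gP _ (f1 _ ha); exact: f3.
exists g; split; last by rewrite -fx gf.
split; first by move=> a /gP [].
split.
  move=> a b ha hb; have [ga1 ga2] := gP _ ha; have [gb1 gb2] := gP _ hb.
  have hab : inSL (a *m b) by apply: inSL_mul.
  have [gab1 gab2] := gP _ hab.
  apply: f3 => //; first by apply: inSL_mul.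
  by rewrite gab2 f2 // ga2 gb2.
split.
  by move=> a b ha hb e; have [_ <-] := gP _ ha; have [_ <-] := gP _ hb; rewrite e.
by move=> c hc; exists (f c); split; [apply: f1 | apply: gf].
Qed.
End Grp.

Section Inv.
Variable N : nat.
Local Notation n := N.+1.
Local Notation Mat := 'M[int]_n.
Variables (e : Mat) (i j : 'I_n).
Hypothesis ee : e * e = 0.
Hypothesis eij : e i j = 1.
Local Notation E p := (1 + (p%N)%:Z *: e).
Hypothesis hE1 : inSL (E 1).
Hypothesis hpow : forall p, E 1 ^+ p = E p.

Lemma inv_E p p' : (0 < p)%N -> (0 < p')%N -> good n p -> good n p' ->
  aut_equiv (E p) (E p') -> p = p'.
Proof.
move=> p0 p'0 gp gp' [f [fa fx]].
have fa' := fa; move: fa' => [f1 [f2 [f3 f4]]].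
apply/eqP; rewrite eqn_dvd; apply/andP; split.
  apply: (@powdivd N (f (E 1)) e p p' i j p0 gp ee eij).
  by rewrite -(prednK p0) -aut_pow // prednK // hpow.
have [x [hx fx1]] := f4 _ hE1.
have hxp : x ^+ p' = E p.
  apply: f3; first exact: inSL_pow.
    by rewrite -hpow; apply: inSL_pow.
  by rewrite -(prednK p'0) aut_pow // prednK // fx1 hpow fx.
exact: (@powdivd N x e p' p i j p'0 gp' ee eij).
Qed.
End Inv.

Definition dec (P : Prop) : bool := if excluded_middle_informative P then true else false.
Lemma decP (P : Prop) : reflect P (dec P).
Proof. by rewrite /dec; case: excluded_middle_informative => h; constructor. Qed.

Section Count.
Variable N : nat.
Local Notation n := N.+1.
Local Notation Mat := 'M[int]_n.
Variable S : seq Mat.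
Hypothesis hS : forall s, s \in S -> inSL s.

Definition alph : seq (Mat * bool) := [seq (s, b) | s <- S, b <- [:: false; true]].

Fixpoint words k : seq (seq (Mat * bool)) :=
  if k is k'.+1 then [::] :: [seq l :: w | l <- alph, w <- words k'] else [:: [::]].

Lemma size_words k : (size (words k) <= (size alph).+1 ^ k)%N.
Proof.
elim: k => [|k IH] //=; rewrite size_allpairs expnS.
have := leq_mul (leqnn (size alph)) IH.
have : (1 <= (size alph).+1 ^ k)%N by rewrite expn_gt0.
move=> h1 h2; rewrite mulSn; lia.
Qed.

Lemma words_mem k w : word_on S w -> (size w <= k)%N -> w \in words k.
Proof.
elim: k w => [|k IH] [|l w] //= hw hs.
rewrite in_cons /=; apply/allpairsP; exists (l, w) => /=; split => //.
  have hl := hw l (mem_head _ _).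
  destruct l as [s0 b0]; apply/allpairsP; exists (s0, b0) => /=; split => //.
  by case: (b0).
by apply: IH => // l' hl'; apply: hw; rewrite in_cons hl' orbT.
Qed.

Lemma words_ok k w : w \in words k -> word_on S w /\ (size w <= k)%N.
Proof.
elim: k w => [|k IH] w /=; first by rewrite inE => /eqP ->; split => //; exact: word_on_nil.
rewrite in_cons => /orP [/eqP -> | /allpairsP [[l w'] [hl hw' ->]]]; first by split => //; exact: word_on_nil.
have [h1 h2] := IH _ hw'; split => //.
move=> l'; rewrite in_cons => /orP [/eqP -> | /h1 //].
by move: hl => /allpairsP [[s b] [hs _ ->]].
Qed.

Fixpoint rep (L : seq Mat) : seq Mat :=
  if L is x :: L' then
    let r := rep L' in if dec (exists y, y \in r /\ aut_equiv x y) then r else x :: r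
  else [::].

Lemma rep_sub L : {subset rep L <= L}.
Proof.
elim: L => [|x L IH] //= y; case: decP => _.
  by move/IH; rewrite in_cons => ->; rewrite orbT.
by rewrite !in_cons => /orP [-> // | /IH ->]; rewrite orbT.
Qed.

Lemma rep_cover L x : x \in L -> exists y, y \in rep L /\ aut_equiv x y.
Proof.
elim: L => [|z L IH] //=; rewrite in_cons => /orP [/eqP -> | hx].
  case: decP => // _; exists z; split; [exact: mem_head | exact: aut_refl].
have [y [hy ey]] := IH hx; case: decP => _; first by exists y.
by exists y; split => //; rewrite in_cons hy orbT.
Qed.

Lemma rep_uniq L : uniq (rep L).
Proof.
elim: L => [|x L IH] //=; case: decP => // h /=; rewrite IH andbT.
by apply/negP => hx; apply: h; exists x; split => //; exact: aut_refl.
Qed.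

Lemma rep_dist L : (forall x, x \in L -> inSL x) -> forall i j, (i < size (rep L))%N -> (j < size (rep L))%N ->
  aut_equiv (nth 0 (rep L) i) (nth 0 (rep L) j) -> i = j.
Proof.
elim: L => [|x L IH] hL //=.
have IH' := IH (fun y hy => hL y (mem_behead (s := x :: L) hy)).
case: decP => // h; move=> [|i] [|j] //= hi hj eij.
- by case: h; exists (nth 0 (rep L) j); split => //; apply: mem_nth.
- case: h; exists (nth 0 (rep L) i); split; first by apply: mem_nth.
  apply: aut_sym => //; apply: hL; rewrite in_cons; apply/orP; right.
  by apply: rep_sub; apply: mem_nth.
- by congr (_.+1); apply: IH'.
Qed.

Definition ball k := map (@word_val n) (words k).

Lemma ball_SL k x : x \in ball k -> inSL x.
Proof. by move=> /mapP [w /words_ok [hw _] ->]; exact: word_val_SL hS hw. Qed.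

Definition fcount k := size (rep (ball k)).

Lemma orbit_count_f k : orbit_count S k (fcount k).
Proof.
exists (rep (ball k)); split => //; split.
  by move=> x /rep_sub /mapP [w /words_ok [hw hs] ->]; exists w.
split; first by apply: rep_dist; apply: ball_SL.
move=> x [w [hw [hs <-]]].
have [y [hy ey]] := rep_cover (map_f (@word_val n) (words_mem hw hs)).
exists (index y (rep (ball k))); rewrite index_mem nth_index //.
Qed.

Lemma fcount_le k : (fcount k <= (size alph).+1 ^ k)%N.
Proof.
apply: leq_trans (size_words k); rewrite /fcount.
have := uniq_leq_size (rep_uniq (ball k)) (@rep_sub _).
by rewrite size_map.
Qed.

Lemma fcount_ge (T : finType) (g : T -> Mat) k :
  (forall t, wlen_le S k (g t)) -> (forall t t', aut_equiv (g t) (g t') -> t = t') ->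
  (#|T| <= fcount k)%N.
Proof.
move=> hg hinj.
pose s := rep (ball k).
have inb : forall t, g t \in ball k.
  by move=> t; have [w [hw [hs <-]]] := hg t; apply: map_f; apply: words_mem.
pose h t := find (fun y => dec (aut_equiv (g t) y)) s.
have hhas : forall t, has (fun y => dec (aut_equiv (g t) y)) s.
  move=> t; have [y [hy ey]] := rep_cover (inb t); apply/hasP; exists y => //; exact/decP.
have hn : forall t, aut_equiv (g t) (nth 0 s (h t)).
  by move=> t; apply/decP; rewrite /h; apply: (nth_find 0 (hhas t)).
have hin : forall t, (h t < size s)%N by move=> t; rewrite /h -has_find; apply: hhas.
have hinj' : injective h.
  move=> t t' e; apply: hinj; apply: aut_trans (hn t) _; rewrite e.
  apply: aut_sym; last exact: hn.
  by apply: ball_SL; exact: inb.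
have hu : uniq (map h (enum T)) by rewrite map_inj_uniq // enum_uniq.
have := uniq_leq_size hu (s2 := iota 0 (size s)).
rewrite size_map -cardT size_iota; apply => _ /mapP [t _ ->].
by rewrite mem_iota add0n hin.
Qed.
End Count.

Section Digits.
Variable K : nat.
Hypothesis K0 : (0 < K)%N.

Fixpoint Hv (bs : seq bool) : nat * nat :=
  if bs is b :: bs' then
    let v := Hv bs' in (v.1 + v.2 + (if b then K else 0), v.1 + 2 * v.2 + (if b then K else 0))%N
  else (0, 0)%N.

Fixpoint Pv (j : nat) : nat * nat :=
  if j is j'.+1 then let v := Pv j' in (v.1 + v.2, v.1 + 2 * v.2)%N else (K, K).

Lemma Hv_rcons bs c : Hv (rcons bs c) =
  ((Hv bs).1 + (if c then (Pv (size bs)).1 else 0), (Hv bs).2 + (if c then (Pv (size bs)).2 else 0))%N.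
Proof.
elim: bs => [|b bs IH] /=; first by case: c.
rewrite IH /=; clear IH; case: (Hv bs) => x y; case: (Pv (size bs)) => u v /=.
by case: b; case: c; congr pair; lia.
Qed.

Lemma Pv_ge j : (0 < (Pv j).1 <= (Pv j).2)%N.
Proof. elim: j => [|j IH] /=; first by rewrite K0 leqnn. lia. Qed.

Lemma Hv_lt bs : ((Hv bs).1 < (Pv (size bs)).1)%N.
Proof.
elim/last_ind: bs => [|bs c IH] /=; first by rewrite K0.
rewrite Hv_rcons size_rcons /=; have := Pv_ge (size bs).
case: c; lia.
Qed.

Lemma Hv_inj bs cs : size bs = size cs -> (Hv bs).1 = (Hv cs).1 -> bs = cs.
Proof.
elim/last_ind: bs cs => [|bs c IH] cs.
  by case: cs.
case/lastP: cs => [|cs c'] //; rewrite ?size_rcons // => -[] hs.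
rewrite !Hv_rcons /= -hs => e.
have h1 := Hv_lt bs; have h2 := Hv_lt cs; rewrite -hs in h2.
have hc : c = c' by move: e; case: c; case: c' => //; lia.
subst c'; congr rcons; apply: IH => //; move: e; case: c; lia.
Qed.

Lemma Hv_dvd bs : (K %| (Hv bs).1)%N && (K %| (Hv bs).2)%N.
Proof.
elim: bs => [|b bs IH] /=; first by rewrite dvdn0.
move/andP: IH => [h1 h2].
by case: b; rewrite ?addn0 ?dvdn_add ?dvdnn ?dvdn_mull.
Qed.
Lemma Hv_dvd' bs : (K %| (Hv bs).1)%N.
Proof. by case/andP: (Hv_dvd bs). Qed.
End Digits.

Section Build.
Variable N : nat.
Local Notation n := N.+1.
Local Notation Mat := 'M[int]_n.
Variables i0 i1 i2 : 'I_n.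
Hypothesis h01 : (i0 == i1) = false.
Hypothesis h02 : (i0 == i2) = false.
Hypothesis h12 : (i1 == i2) = false.
Variable K : nat.
Variables wRi wLi wL wR : seq (Mat * bool).
Hypothesis eRi : word_val wRi = Em i1 i2 (-1).
Hypothesis eLi : word_val wLi = Em i2 i1 (-1).
Hypothesis eL : word_val wL = Em i2 i1 1.
Hypothesis eR : word_val wR = Em i1 i2 1.

Fixpoint build (wu : seq (Mat * bool)) (bs : seq bool) : seq (Mat * bool) :=
  if bs is b :: bs' then wRi ++ wLi ++ build wu bs' ++ wL ++ wR ++ (if b then wu else [::])
  else [::].

Lemma Um00 : Um i0 i1 i2 0 0 = 1.
Proof. by rewrite /Um !scale0r !addr0. Qed.

Lemma build_val (s : int) wu bs : word_val wu = Um i0 i1 i2 (s * K%:Z) (s * K%:Z) ->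
  word_val (build wu bs) = Um i0 i1 i2 (s * (Hv K bs).1%:Z) (s * (Hv K bs).2%:Z).
Proof.
move=> eu; elim: bs => [|b bs IH] /=; first by rewrite !mulr0 Um00.
rewrite !word_val_cat IH eRi eLi eL eR !mulrA -(mulrA (Em i1 i2 (-1))) -(mulrA (Em i1 i2 (-1))).
rewrite conjL // conjR //.
case: b; rewrite ?eu ?UU //= ?mulr1.
  by congr Um; rewrite !PoszD ?PoszM; ring.
idtac.
by congr Um; rewrite !addn0 !PoszD ?PoszM; ring.
Qed.

Lemma build_size wu bs : (size (build wu bs) <= size bs * (size wRi + size wLi + size wL + size wR + size wu))%N.
Proof.
elim: bs => [|b bs IH] //=; rewrite !size_cat.
case: b => /=; lia.
Qed.

Lemma build_on (S : seq Mat) wu bs : word_on S wRi -> word_on S wLi -> word_on S wL ->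
  word_on S wR -> word_on S wu -> word_on S (build wu bs).
Proof.
move=> h1 h2 h3 h4 h5; elim: bs => [|b bs IH] /=; first exact: word_on_nil.
do 5 (apply: word_on_cat => //); by case: b => //; exact: word_on_nil.
Qed.

Variables wup wum wE : seq (Mat * bool).
Hypothesis eup : word_val wup = Um i0 i1 i2 K%:Z K%:Z.
Hypothesis eum : word_val wum = Um i0 i1 i2 (- K%:Z) (- K%:Z).
Hypothesis eE : word_val wE = Em i0 i2 1.

Definition fullw bs := build wup bs ++ wR ++ build wum bs ++ wRi ++ wE.

Lemma fullw_val bs : word_val (fullw bs) = Em i0 i2 ((Hv K bs).1 + 1)%N%:Z.
Proof.
rewrite /fullw !word_val_cat (build_val (s := 1)) ?mul1r //.
rewrite (build_val (s := -1)) ?mulN1r ?mul1r // eR eRi eE !mulrA commU //.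
by rewrite EE // PoszD.
Qed.
End Build.

Lemma pow_le a b k : (a <= b)%N -> (a ^ k <= b ^ k)%N.
Proof. move=> ab; elim: k => [|k IH] //; rewrite !expnS; exact: leq_mul. Qed.

Lemma good_fact N a : (N`! %| a)%N -> good N.+1 (a + 1).
Proof.
move=> Ka r pr ra; rewrite leqNgt; apply/negP => rN.
have rK : (r %| N`!)%N by apply: dvdn_fact; rewrite prime_gt0 //=; rewrite ltnS in rN.
have : (r %| 1)%N by rewrite -(dvdn_addr 1 (dvdn_trans rK Ka)).
by rewrite dvdn1 => /eqP r1; rewrite r1 in pr.
Qed.

Theorem mainTheorem18 (m : nat) (hm : (3 <= m)%N) (Sigma : seq 'M[int]_m) :
  gen_set Sigma ->
  exists f : nat -> nat, aut_growth_fun Sigma f /\ exponential f.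
Proof.
case: m hm Sigma => [|[|[|N']]] // _ Sigma [hS hgen].
pose i0 : 'I_N'.+3 := @Ordinal N'.+3 0 isT.
pose i1 : 'I_N'.+3 := @Ordinal N'.+3 1 isT.
pose i2 : 'I_N'.+3 := @Ordinal N'.+3 2 isT.
have h01 : (i0 == i1) = false by [].
have h02 : (i0 == i2) = false by [].
have h12 : (i1 == i2) = false by [].
pose K := N'.+2`!.
have K0 : (0 < K)%N := fact_gt0 N'.+2.
have slE : forall (i j : 'I_N'.+3) t, i != j -> inSL (Em i j t) by move=> i j t ij; exact: det_Em.
have [wRi [oRi eRi]] := hgen _ (slE i1 i2 (-1) isT).
have [wLi [oLi eLi]] := hgen _ (slE i2 i1 (-1) isT).
have [wL [oL eL]] := hgen _ (slE i2 i1 1 isT).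
have [wR [oR eR]] := hgen _ (slE i1 i2 1 isT).
have [wE [oE eE]] := hgen _ (slE i0 i2 1 isT).
have slU : forall a b, inSL (Um i0 i1 i2 a b).
  by move=> a b; rewrite (Um_split i2 h01); apply: inSL_mul; apply: slE.
have [wup [oup eup]] := hgen _ (slU K%:Z K%:Z).
have [wum [oum eum]] := hgen _ (slU (- K%:Z) (- K%:Z)).
exists (fcount Sigma); split; first exact: orbit_count_f.
split.
  pose a1 := (size (alph Sigma)).+1.
  exists a1; split => // k.
  apply: leq_trans (fcount_le Sigma k) _.
  have h1 : (a1 ^ k <= 2 ^ (a1 * k))%N by rewrite expnM; apply: pow_le; apply: ltnW; apply: ltn_expl.
  have h2 : (2 ^ (a1 * k) <= 2 ^ (a1 * k + a1))%N by rewrite leq_exp2l // leq_addr.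
  have h3 : (2 ^ (a1 * k + a1) <= a1 * 2 ^ (a1 * k + a1))%N by rewrite leq_pmull.
  by apply: leq_trans (leq_addr _ _); apply: leq_trans h3; apply: leq_trans h2.
pose C := (size wRi + size wLi + size wL + size wR + size wup + size wum + size wE)%N.
exists (3 * C).+1; split => // k.
pose g (t : k.-tuple bool) := Em i0 i2 ((Hv K t).1 + 1)%N%:Z.
have := @fcount_ge _ _ hS _ g ((3 * C).+1 * k + (3 * C).+1)%N.
rewrite card_tuple card_bool => H; apply: leq_trans (leq_addr _ _).
apply: leq_trans (leq_pmull _ _) => //; apply: H.
  move=> t; exists (fullw wRi wLi wL wR wup wum wE t); split; last split.
  - rewrite /fullw; apply: word_on_cat; first exact: build_on.
    apply: word_on_cat => //; apply: word_on_cat; first exact: build_on.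
    by apply: word_on_cat.
  - rewrite /fullw !size_cat.
    have s1 := build_size h01 h02 h12 wRi wLi wL wR wup t.
    have s2 := build_size h01 h02 h12 wRi wLi wL wR wum t.
    rewrite size_tuple in s1 s2.
    have t1 : (k * (size wRi + size wLi + size wL + size wR + size wup) <= k * C)%N.
      by apply: leq_mul => //; rewrite /C; lia.
    have t2 : (k * (size wRi + size wLi + size wL + size wR + size wum) <= k * C)%N.
      by apply: leq_mul => //; rewrite /C; lia.
    have t3 : ((3 * C).+1 * k = 3 * (k * C) + k)%N by rewrite mulSn; lia.
    have u1 := leq_trans s1 t1; have u2 := leq_trans s2 t2.
    rewrite -/C t3; move: u1 u2; generalize (k * C)%N => X.
    generalize (size (build wRi wLi wL wR wup t)) (size (build wRi wLi wL wR wum t)) => Y1 Y2.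
    unfold C; lia.
  - exact: (fullw_val h01 h02 h12 eRi eLi eL eR eup eum eE t).
move=> t t' ett'.
have pos : forall x, (0 < x + 1)%N by move=> x; rewrite addn1.
have ee : delta_mx i0 i2 * delta_mx i0 i2 = 0 :> 'M[int]_N'.+3 by rewrite dd eq_sym h02 mulr0n.
have eij : (delta_mx i0 i2 : 'M[int]_N'.+3) i0 i2 = 1 by rewrite mxE !eqxx.
have := @inv_E N'.+2 (delta_mx i0 i2) i0 i2 ee eij (slE i0 i2 1 isT) (EE_pow h02) _ _
  (pos _) (pos _) (good_fact (Hv_dvd' _ _)) (good_fact (Hv_dvd' _ _)) ett'.
move/eqP; rewrite eqn_add2r => /eqP /(Hv_inj K0) e.
by apply: val_inj; apply: e; rewrite !size_tuple.
Qed.
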